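(* Let $A,B\in \mathbb{R}^{m\times n}$ with $m<n$ and let $1\le p\le\infty$. Suppose $A = M_A - N_A$ with $M_A,N_A\in\mathbb{R}^{m\times n}$, $\operatorname{rank}(M_A) = m$, and $\|M_A^\dagger N_A\|_p+ \|M_A^\dagger B\|_p < 1.$ Then for any given $b\in\mathbb{R}^m$, the equation $x = M_A^\dagger\left(N_A x + B|x|+b\right)$ in $x\in\mathbb{R}^n$ has a unique solution, and that solution also satisfies the generalized absolute value equation $Ax-B|x|=b$.
   Context: $M^\dagger$ denotes the Moore–Penrose inverse of $M$. $|x|$ denotes the entrywise absolute value of $x\in\mathbb{R}^n$. $\|\cdot\|_p$ on matrices denotes the operator norm induced by the vector $p$-norm. *)

(* Defs.v *)
From HB Require Import structures.
From mathcomp Require Import all_boot all_order all_algebra.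
From mathcomp Require Import all_classical all_reals all_analysis.
Set Implicit Arguments. Unset Strict Implicit. Unset Printing Implicit Defensive.
Import Order.TTheory GRing.Theory Num.Theory.
Local Open Scope ring_scope.
Local Open Scope classical_set_scope.

Definition is_mpinv (R : realType) (m n : nat) (M : 'M[R]_(m, n)) (X : 'M[R]_(n, m)) : Prop :=
  [/\ M *m X *m M = M, X *m M *m X = X, (M *m X)^T = M *m X & (X *m M)^T = X *m M].

(* The Moore-Penrose inverse M^dagger (unique, exists for every real matrix). *)
Definition mpinv (R : realType) (m n : nat) (M : 'M[R]_(m, n)) : 'M[R]_(n, m) :=
  xget 0 [set X | is_mpinv M X].

Definition absv (R : realType) (n : nat) (x : 'cV[R]_n) : 'cV[R]_n :=
  map_mx (fun a => `|a|) x.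

Definition vpnorm (R : realType) (p : \bar R) (n : nat) (x : 'cV[R]_n) : R :=
  match p with
  | EFin r => (\sum_(i < n) `|x i 0| `^ r) `^ r^-1
  | _ => \big[Num.max/0]_(i < n) `|x i 0|
  end.

Definition opnorm (R : realType) (p : \bar R) (k n : nat) (M : 'M[R]_(k, n)) : R :=
  sup [set vpnorm p (M *m x) / vpnorm p x | x in [set x : 'cV[R]_n | x != 0]].

(* Main.v *)
Require Import Defs.
From HB Require Import structures.
From mathcomp Require Import all_boot all_order all_algebra.
From mathcomp Require Import all_classical all_reals all_analysis.
From mathcomp Require Import ring lra.
Import Order.TTheory GRing.Theory Num.Theory.
Local Open Scope ring_scope.

Section Helpers.
Variable R : realType.

Lemma bigmax_ge {I : eqType} (s : seq I) (F : I -> R) j :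
  j \in s -> F j <= \big[Num.max/0]_(i <- s) F i.
Proof.
elim: s => // a s IH; rewrite inE big_cons => /orP[/eqP->|/IH H].
  by rewrite le_max lexx.
by rewrite le_max H orbT.
Qed.

Lemma bigmax_le {I : eqType} (s : seq I) (F : I -> R) c :
  0 <= c -> (forall i, F i <= c) -> \big[Num.max/0]_(i <- s) F i <= c.
Proof. by move=> c0 Fc; elim: s => [|a s IH]; rewrite ?big_nil ?big_cons // ge_max Fc IH. Qed.

Lemma bigmax_ge0 {I : eqType} (s : seq I) (F : I -> R) :
  0 <= \big[Num.max/0]_(i <- s) F i.
Proof. by elim: s => [|a s IH]; rewrite ?big_nil ?big_cons // le_max IH orbT. Qed.

Lemma entry_le_cnorm k l (x : 'M[R]_(k, l)) i j : `|x i j| <= `|x|.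
Proof.
rewrite [X in _ <= X]mx_normrE.
exact: (@bigmax_ge _ _ _ (i, j) (mem_index_enum (i, j))).
Qed.

Lemma cnorm_le k l (x : 'M[R]_(k, l)) c :
  0 <= c -> (forall i j, `|x i j| <= c) -> `|x| <= c.
Proof.
move=> c0 H; rewrite [X in X <= _]mx_normrE; apply: bigmax_le => // -[i j]; exact: H.
Qed.

Lemma powRK (a r : R) : 0 <= a -> r != 0 -> (a `^ r) `^ r^-1 = a.
Proof. by move=> a0 r0; rewrite -powRrM mulfV // powRr1. Qed.

Lemma powRK' (a r : R) : 0 <= a -> r != 0 -> (a `^ r^-1) `^ r = a.
Proof. by move=> a0 r0; rewrite -powRrM mulVf // powRr1. Qed.

Lemma powR_mono (r a b : R) : 0 <= r -> 0 <= a -> a <= b -> a `^ r <= b `^ r.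
Proof.
move=> r0 a0 ab; apply: (ge0_ler_powR r0) => //; rewrite nnegrE //.
exact: le_trans ab.
Qed.

Lemma convpow (r l u v : R) : 1 <= r -> 0 <= l -> l <= 1 -> 0 <= u -> 0 <= v ->
  (l * u + (1 - l) * v) `^ r <= l * u `^ r + (1 - l) * v `^ r.
Proof.
move=> r1 l0 l1 u0 v0.
have := @convex_powR R r r1 (Itv01 l0 l1) u v.
have iu : u \in `[0, +oo[%classic by apply/mem_set; rewrite /= in_itv /= andbT.
have iv : v \in `[0, +oo[%classic by apply/mem_set; rewrite /= in_itv /= andbT.
by move=> /(_ iu iv); rewrite !convRE.
Qed.

Lemma pcase (p : \bar R) : (1 <= p)%E -> p = +oo%E \/ exists2 r, p = r%:E & 1 <= r.
Proof.
case: p => [r| |].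
- by rewrite lee_fin => r1; right; exists r.
- by left.
- by rewrite leeNy_eq.
Qed.


Lemma sum_term_le k (F : 'I_k -> R) i : (forall j, 0 <= F j) -> F i <= \sum_(j < k) F j.
Proof.
move=> F0; rewrite (bigD1 i) //= lerDl; apply: sumr_ge0 => j _; exact: F0.
Qed.

Lemma vp_fin_entry (r : R) k (x : 'cV[R]_k) i : 1 <= r ->
  `|x i 0| <= vpnorm r%:E x.
Proof.
move=> r1; have r0 : r != 0 by rewrite gt_eqF // (lt_le_trans ltr01 r1).
rewrite /= -{1}(powRK _ _ (normr_ge0 (x i 0)) r0).
apply: powR_mono; first by rewrite invr_ge0 (le_trans ler01 r1).
  exact: powR_ge0.
by apply: (sum_term_le _ (fun j => `|x j 0| `^ r) i) => j; exact: powR_ge0.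
Qed.

Lemma vp_fin_zero (r : R) k (x : 'cV[R]_k) : 1 <= r ->
  vpnorm r%:E x = 0 -> x = 0.
Proof.
move=> r1 h; apply/matrixP => i j; rewrite (ord1 j) mxE; apply/eqP.
by rewrite -normr_le0 -h (vp_fin_entry _ _ _ _ r1).
Qed.

Lemma minkowski_fin (r : R) k (a b : 'cV[R]_k) : 1 <= r ->
  vpnorm r%:E (a + b) <= vpnorm r%:E a + vpnorm r%:E b.
Proof.
move=> r1; have r0 : 0 < r by rewrite (lt_le_trans ltr01 r1).
have rn0 : r != 0 by rewrite gt_eqF.
have sa0 : 0 <= \sum_(i < k) `|a i 0| `^ r.
  by apply: sumr_ge0 => i _; exact: powR_ge0.
have sb0 : 0 <= \sum_(i < k) `|b i 0| `^ r.
  by apply: sumr_ge0 => i _; exact: powR_ge0.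
have Ar : (vpnorm r%:E a) `^ r = \sum_(i < k) `|a i 0| `^ r by rewrite /= powRK'.
have Br : (vpnorm r%:E b) `^ r = \sum_(i < k) `|b i 0| `^ r by rewrite /= powRK'.
have Az := vp_fin_zero _ _ a r1.
have Bz := vp_fin_zero _ _ b r1.
have A0 : 0 <= vpnorm r%:E a by exact: powR_ge0.
have B0 : 0 <= vpnorm r%:E b by exact: powR_ge0.
have [Ae|Ap] := eqVneq (vpnorm r%:E a) 0.
  rewrite Ae (Az Ae) !add0r; exact: lexx.
have [Be|Bp] := eqVneq (vpnorm r%:E b) 0.
  rewrite Be (Bz Be) !addr0; exact: lexx.
move: (vpnorm r%:E a) (vpnorm r%:E b) Ar Br Ap Bp A0 B0 => A B Ar Br Ap Bp A0 B0.
have Agt : 0 < A by rewrite lt_neqAle eq_sym Ap.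
have Bgt : 0 < B by rewrite lt_neqAle eq_sym Bp.
set S := A + B.
have Sgt : 0 < S by rewrite addr_gt0.
set l := A / S.
have l0 : 0 <= l by rewrite divr_ge0 // ltW.
have l1 : l <= 1 by rewrite ler_pdivrMr // mul1r lerDl ltW.
have sumA : \sum_(i < k) (`|a i 0| / A) `^ r = 1.
  have Arp : 0 < A `^ r by rewrite powR_gt0.
  apply: (mulIf (lt0r_neq0 Arp)); rewrite mul1r mulr_suml {2}Ar.
  apply: eq_bigr => i _; rewrite -powRM ?divr_ge0 //.
  by rewrite divfK // gt_eqF.
have sumB : \sum_(i < k) (`|b i 0| / B) `^ r = 1.
  have Brp : 0 < B `^ r by rewrite powR_gt0.
  apply: (mulIf (lt0r_neq0 Brp)); rewrite mul1r mulr_suml {2}Br.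
  apply: eq_bigr => i _; rewrite -powRM ?divr_ge0 //.
  by rewrite divfK // gt_eqF.
have key : \sum_(i < k) `|(a + b) i 0| `^ r <= S `^ r.
  apply: (@le_trans _ _ (\sum_(i < k) S `^ r *
      (l * (`|a i 0| / A) `^ r + (1 - l) * (`|b i 0| / B) `^ r))).
    apply: ler_sum => i _.
    have e : `|a i 0| + `|b i 0| =
        S * (l * (`|a i 0| / A) + (1 - l) * (`|b i 0| / B)).
      rewrite /l /S; field; rewrite ?gt_eqF //.
    have ua : 0 <= `|a i 0| / A by rewrite divr_ge0.
    have ub : 0 <= `|b i 0| / B by rewrite divr_ge0.
    have w0 : 0 <= l * (`|a i 0| / A) + (1 - l) * (`|b i 0| / B).
      by rewrite addr_ge0 // mulr_ge0 // subr_ge0.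
    apply: (@le_trans _ _ ((`|a i 0| + `|b i 0|) `^ r)).
      apply: powR_mono; [exact: ltW | exact: normr_ge0 | rewrite mxE; exact: ler_normD].
    rewrite e (powRM r (ltW Sgt) w0).
    apply: ler_wpM2l; first exact: powR_ge0.
    exact: convpow.
  rewrite -mulr_sumr big_split /= -!mulr_sumr sumA sumB !mulr1.
  by rewrite subrKC mulr1.
rewrite /= -[S](powRK _ _ (ltW Sgt) rn0).
apply: powR_mono => //; first by rewrite invr_ge0 ltW.
by apply: sumr_ge0 => i _; exact: powR_ge0.
Qed.


Lemma vp_ge0 (p : \bar R) k (x : 'cV[R]_k) : (1 <= p)%E -> 0 <= vpnorm p x.
Proof. by case/pcase => [->|[r -> r1]]; [exact: bigmax_ge0 | exact: powR_ge0]. Qed.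

Lemma vp_entry (p : \bar R) k (x : 'cV[R]_k) i : (1 <= p)%E -> `|x i 0| <= vpnorm p x.
Proof.
case/pcase => [->|[r -> r1]]; last exact: vp_fin_entry.
exact: (@bigmax_ge _ _ (fun j => `|x j 0|) i (mem_index_enum i)).
Qed.

Lemma vp_mono (p : \bar R) k (x y : 'cV[R]_k) : (1 <= p)%E ->
  (forall i, `|x i 0| <= `|y i 0|) -> vpnorm p x <= vpnorm p y.
Proof.
move=> hp H; case/pcase: hp => [->|[r -> r1]].
  apply: bigmax_le; first exact: bigmax_ge0.
  move=> i; apply: le_trans (H i) _.
  exact: (@bigmax_ge _ _ (fun j => `|y j 0|) i (mem_index_enum i)).
have r0 : 0 <= r by rewrite (le_trans ler01 r1).
apply: powR_mono; first by rewrite invr_ge0.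
  by apply: sumr_ge0 => i _; exact: powR_ge0.
apply: ler_sum => i _; apply: powR_mono => //; exact: normr_ge0.
Qed.

Lemma vp_tri (p : \bar R) k (x y : 'cV[R]_k) : (1 <= p)%E ->
  vpnorm p (x + y) <= vpnorm p x + vpnorm p y.
Proof.
case/pcase => [->|[r -> r1]]; last exact: minkowski_fin.
apply: bigmax_le; first by rewrite addr_ge0 // bigmax_ge0.
move=> i; rewrite mxE; apply: le_trans (ler_normD _ _) _.
apply: lerD.
  exact: (@bigmax_ge _ _ (fun j => `|x j 0|) i (mem_index_enum i)).
exact: (@bigmax_ge _ _ (fun j => `|y j 0|) i (mem_index_enum i)).
Qed.

Definition Kc (p : \bar R) (k : nat) : R :=
  match p with EFin r => (k%:R) `^ r^-1 | _ => 1 end.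

Lemma Kc_ge0 p k : 0 <= Kc p k.
Proof. by case: p => [r||] /=; rewrite ?ler01 ?powR_ge0. Qed.

Lemma vp_cnorm (p : \bar R) k (x : 'cV[R]_k) : (1 <= p)%E ->
  vpnorm p x <= Kc p k * `|x|.
Proof.
case/pcase => [->|[r -> r1]].
  rewrite /= mul1r; apply: bigmax_le => // i; exact: entry_le_cnorm.
have r0 : 0 < r by rewrite (lt_le_trans ltr01 r1).
have ri0 : 0 <= r^-1 by rewrite invr_ge0 ltW.
rewrite /= -[in X in _ <= _ * X](powRK _ _ (normr_ge0 x) (lt0r_neq0 r0)).
rewrite -powRM ?ler0n ?powR_ge0 //.
apply: powR_mono => //; first by apply: sumr_ge0 => i _; exact: powR_ge0.
apply: (@le_trans _ _ (\sum_(i < k) `|x| `^ r)).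
  apply: ler_sum => i _.
  apply: powR_mono; [exact: ltW | exact: normr_ge0 | exact: entry_le_cnorm].
by rewrite sumr_const card_ord mulr_natl.
Qed.

Lemma cnorm_vp (p : \bar R) k (x : 'cV[R]_k) : (1 <= p)%E -> `|x| <= vpnorm p x.
Proof.
move=> hp; apply: cnorm_le; first exact: vp_ge0.
by move=> i j; rewrite (ord1 j); exact: vp_entry.
Qed.

Lemma vp0 (p : \bar R) k : (1 <= p)%E -> vpnorm p (0 : 'cV[R]_k) = 0.
Proof.
move=> hp; apply/eqP; rewrite eq_le vp_ge0 // andbT.
by apply: le_trans (vp_cnorm _ _ _ hp) _; rewrite normr0 mulr0.
Qed.

Lemma vp_eq0 (p : \bar R) k (x : 'cV[R]_k) : (1 <= p)%E -> vpnorm p x <= 0 -> x = 0.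
Proof.
move=> hp h; apply/eqP; rewrite -normr_le0; exact: le_trans (cnorm_vp _ _ _ hp) h.
Qed.

Lemma vp_gt0 (p : \bar R) k (x : 'cV[R]_k) : (1 <= p)%E -> x != 0 -> 0 < vpnorm p x.
Proof.
move=> hp x0; rewrite lt_neqAle vp_ge0 // andbT; apply/eqP => h.
by move: x0; rewrite (vp_eq0 _ _ x hp) ?eqxx // -h.
Qed.

Lemma mulmx_cnorm k l (M : 'M[R]_(k, l)) (x : 'cV[R]_l) :
  `|M *m x| <= (l%:R * `|M|) * `|x|.
Proof.
apply: cnorm_le; first by rewrite !mulr_ge0.
move=> i j; rewrite mxE; apply: le_trans (ler_norm_sum _ _ _) _.
apply: (@le_trans _ _ (\sum_(j0 < l) `|M| * `|x|)).
  apply: ler_sum => j0 _; rewrite normrM.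
  by apply: ler_pM => //; exact: entry_le_cnorm.
by rewrite sumr_const card_ord -mulrA mulr_natl.
Qed.

Lemma opnorm_ub (p : \bar R) k l (M : 'M[R]_(k, l)) : (1 <= p)%E ->
  has_ubound [set vpnorm p (M *m x) / vpnorm p x | x in [set x : 'cV[R]_l | x != 0]].
Proof.
move=> hp; exists (Kc p k * (l%:R * `|M|)) => _ [x /= x0 <-].
have xp := vp_gt0 _ _ _ hp x0.
rewrite ler_pdivrMr //; apply: le_trans (vp_cnorm _ _ _ hp) _.
rewrite -mulrA; apply: ler_wpM2l; first exact: Kc_ge0.
apply: le_trans (mulmx_cnorm _ _ _ _) _.
by apply: ler_wpM2l; [rewrite mulr_ge0 | exact: cnorm_vp].
Qed.

Lemma opnorm_bound (p : \bar R) k l (M : 'M[R]_(k, l)) (x : 'cV[R]_l) : (1 <= p)%E ->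
  vpnorm p (M *m x) <= opnorm p M * vpnorm p x.
Proof.
move=> hp; have [->|x0] := eqVneq x 0.
  by rewrite mulmx0 !vp0 // mulr0.
have xp := vp_gt0 _ _ _ hp x0.
rewrite -ler_pdivrMr //; apply: ub_le_sup; first exact: opnorm_ub.
by exists x.
Qed.

Lemma opnorm_ge0 (p : \bar R) k l (M : 'M[R]_(k, l)) : (1 <= p)%E -> (0 < l)%N ->
  0 <= opnorm p M.
Proof.
move=> hp l0; pose x : 'cV[R]_l := const_mx 1.
have x0 : x != 0.
  apply/eqP => /matrixP /(_ (Ordinal l0) 0); rewrite !mxE => /eqP.
  by rewrite oner_eq0.
apply: le_trans (ub_le_sup (opnorm_ub _ _ _ M hp) _); last by exists x.
by rewrite divr_ge0 // vp_ge0.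
Qed.


Lemma gram_unit m n (M : 'M[R]_(m, n)) : \rank M = m -> M *m M^T \in unitmx.
Proof.
move=> hr; have rf : row_free M by rewrite /row_free hr.
rewrite -row_free_unit; apply: inj_row_free => v H.
have H2 : (v *m M) *m (v *m M)^T = 0.
  by rewrite trmx_mul !mulmxA -(mulmxA v M) H mul0mx.
have vM : v *m M = 0.
  move: H2; set w := v *m M; clearbody w => H2.
  apply/matrixP => i j; rewrite (ord1 i) mxE.
  move/matrixP: H2 => /(_ 0 0); rewrite !mxE => H3.
  have := @psumr_eq0P _ _ xpredT (fun k => w 0 k * w 0 k).
  have sq : forall z : R, 0 <= z * z by move=> z; rewrite -expr2 sqr_ge0.
  move=> /(_ (fun k _ => sq _)).
  have -> : \sum_(k < n) w 0 k * w 0 k = 0.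
    by apply: etrans H3; apply: eq_bigr => k _; rewrite !mxE.
  by move=> /(_ erefl j isT) /eqP; rewrite mulf_eq0 orbb => /eqP.
by apply: (row_free_inj rf); rewrite vM mul0mx.
Qed.

Lemma mpinv_right m n (M : 'M[R]_(m, n)) : \rank M = m -> M *m mpinv M = 1%:M.
Proof.
move=> hr; have G := gram_unit _ _ _ hr.
pose X0 := M^T *m invmx (M *m M^T).
have MX0 : M *m X0 = 1%:M by rewrite /X0 mulmxA mulmxV.
have hX0 : is_mpinv M X0.
  split.
  - by rewrite MX0 mul1mx.
  - by rewrite -mulmxA MX0 mulmx1.
  - by rewrite MX0 trmx1.
  - by rewrite /X0 !trmx_mul trmxK trmx_inv trmx_mul trmxK mulmxA.
have [h1 _ _ _] : is_mpinv M (mpinv M) by apply: (xgetPex 0); exists X0.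
by rewrite -[LHS]mulmx1 -MX0 mulmxA h1.
Qed.

End Helpers.

HB.instance Definition _ (R : realType) m n := Complete.on 'M[R]_(m, n).

Theorem theorem3p1 (R : realType) (m n : nat) (p : \bar R)
  (A B MA NA : 'M[R]_(m, n)) :
  (m < n)%N -> (1 <= p)%E -> A = MA - NA -> \rank MA = m ->
  opnorm p (mpinv MA *m NA) + opnorm p (mpinv MA *m B) < 1 ->
  forall b : 'cV[R]_m,
    exists x : 'cV[R]_n,
      [/\ x = mpinv MA *m (NA *m x + B *m absv x + b),
          A *m x - B *m absv x = b &
          forall y : 'cV[R]_n,
            y = mpinv MA *m (NA *m y + B *m absv y + b) -> y = x].
Proof.
move=> mn hp hA hr hq b.
have n0 : (0 < n)%N by apply: leq_ltn_trans mn.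
have MX := mpinv_right _ _ _ _ hr.
move: hq MX; set X := mpinv MA => hq MX.
have a0 : 0 <= opnorm p (X *m NA) := opnorm_ge0 _ _ _ _ _ hp n0.
have c0 : 0 <= opnorm p (X *m B) := opnorm_ge0 _ _ _ _ _ hp n0.
move: hq a0 c0; set a := opnorm p (X *m NA); set c := opnorm p (X *m B) => hq a0 c0.
pose q := a + c.
have q0 : 0 <= q by rewrite addr_ge0.
pose T := fun y : 'cV[R]_n => X *m (NA *m y + B *m absv y + b).
have contr : forall y z, vpnorm p (T y - T z) <= q * vpnorm p (y - z).
  move=> y z.
  have -> : T y - T z = (X *m NA) *m (y - z) + (X *m B) *m (absv y - absv z).
    rewrite /T -mulmxBr -!mulmxA -mulmxDr; congr (X *m _).
    by rewrite !mulmxBr opprD addrACA subrr addr0 opprD addrACA.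
  apply: le_trans (vp_tri _ _ _ _ _ hp) _.
  rewrite mulrDl; apply: lerD; first exact: opnorm_bound.
  apply: le_trans (opnorm_bound _ _ _ _ _ _ hp) _.
  apply: (ler_wpM2l c0); apply: (vp_mono _ _ _ _ _ hp) => i; rewrite !mxE; exact: ler_dist_dist.
have uniq : forall y z, y = T y -> z = T z -> y = z.
  move=> y z hy hz; apply/eqP; rewrite -subr_eq0; apply/eqP.
  apply: (vp_eq0 _ _ _ _ hp).
  have h := contr y z; rewrite -hy -hz in h.
  have v0 := vp_ge0 _ _ _ (y - z) hp.
  move: (vpnorm p (y - z)) h v0 => v h v0.
  rewrite /q in h; nra.
pose K := Kc _ p n.
have K0 : 0 <= K := Kc_ge0 _ p n.
have qlt : `|q| < 1 by rewrite ger0_norm.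
have eps0 : 0 < (K + 1)^-1 by rewrite invr_gt0 ltr_wpDl.
have [k _ Hk] := cvgr0_norm_lt _ (cvg_expr qlt) _ eps0.
have qk := Hk k (leqnn k).
rewrite /= ger0_norm ?exprn_ge0 // in qk.
have qK0 : 0 <= q ^+ k * K by rewrite mulr_ge0 ?exprn_ge0.
have qK1 : q ^+ k * K < 1.
  have K1 : 0 < K + 1 by rewrite ltr_wpDl.
  rewrite -(ltr_pM2r K1) in qk; rewrite mulVf ?gt_eqF // in qk.
  apply: le_lt_trans qk; rewrite mulrDr mulr1 lerDl; exact: exprn_ge0.
pose F := iter k T.
have Fc : forall j y z, vpnorm p (iter j T y - iter j T z) <= q ^+ j * vpnorm p (y - z).
  elim=> [|j IH] y z /=; first by rewrite expr0 mul1r.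
  apply: le_trans (contr _ _) _; rewrite exprS -mulrA.
  exact: (ler_wpM2l q0).
pose Ff : {fun [set: 'cV[R]_n] >-> [set: 'cV[R]_n]} := totalfun_ setT F.
have ctr : is_contraction Ff.
  exists (NngNum qK0); split => //=.
  move=> [y z] _ /=; rewrite /totalfun_.
  apply: le_trans (cnorm_vp _ _ _ _ hp) _.
  apply: le_trans (Fc k y z) _; rewrite -mulrA.
  apply: (ler_wpM2l (exprn_ge0 _ q0)); exact: vp_cnorm.
have [z _ hz] := banach_fixed_point ctr (@closedT _) (ex_intro _ 0 I).
have hz' : z = F z by exact: hz.
have hTz : T z = F (T z).
  by rewrite /F -iterSr iterS; congr (T _); exact: hz'.
have eTz : T z = z.
  apply: (contraction_fixpoint_unique ctr) => //.
exists z; split.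
- by rewrite -[LHS]eTz.
- have e : MA *m z = NA *m z + B *m absv z + b.
    by rewrite -{1}eTz /T mulmxA MX mul1mx.
  rewrite hA mulmxBl e.
  by rewrite [_ + b]addrC -addrA -opprD addrK.
- move=> y hy; apply: uniq => //; by rewrite -[LHS]eTz.
Qed.
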